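(* Let $\phi$ be a Pogorelov solution. Then its Legendre–Fenchel dual $\phi^*(x)=\sup_{y\in B(0,1)}\{x\cdot y-\phi(y)\}$ is an Aleksandrov solution of the Monge–Ampère problem $\det(D^2u)=\mu$ in $\mathbb{R}^2$, $\partial u(\mathbb{R}^2)\subset B(0,1)$.
   Context: Let $K\ge 1$, $d_1,\dots,d_K\in\mathbb{R}^2$, $\alpha_1,\dots,\alpha_K>0$ with $\sum_k\alpha_k=\pi=|B(0,1)|$, where $B(0,1)$ is the unit ball of $\mathbb{R}^2$ and $|\cdot|$ is Lebesgue measure; let $\mu=\sum_{k=1}^K\alpha_k\delta_{d_k}$. Subgradient of a convex $u$: $\partial u(x)=\{p: u(z)\ge u(x)+p\cdot(z-x)\ \forall z\}$ and $\partial u(E)=\bigcup_{x\in E}\partial u(x)$. An Aleksandrov solution is a convex function $u$ with $\partial u(\mathbb{R}^2)\subset B(0,1)$ and $|\partial u(E)|=\mu(E)$ for every measurable $E\subset\mathbb{R}^2$. A Pogorelov solution is a function $\phi(y)=\max_{k}\{y\cdot d_k-v_k\}$ on $B(0,1)$ (extended by $+\infty$ outside $B(0,1)$), for some reals $v_1,\dots,v_K$, such that $|C_k|=\alpha_k$ for every $k$, where $C_k=\{y\in B(0,1):\phi$ is differentiable at $y$ and $\nabla\phi(y)=d_k\}$. *)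

(* Defs.v *)
From HB Require Import structures.
From mathcomp Require Import all_boot all_order all_algebra.
From mathcomp Require Import all_classical all_reals all_analysis.
Set Implicit Arguments. Unset Strict Implicit. Unset Printing Implicit Defensive.
Import Order.TTheory GRing.Theory Num.Theory.
Import numFieldNormedType.Exports.
Local Open Scope classical_set_scope.
Local Open Scope ring_scope.

Section Defs.
Context {R : realType}.
Implicit Types (x y p z : R * R).

Definition dot x y : R := x.1 * y.1 + x.2 * y.2.

(* the closed unit ball B(0,1) (it must be closed) *)
Definition ball01 : set (R * R) := [set y | y.1 ^+ 2 + y.2 ^+ 2 <= 1].

Definition leb2 : set (R * R) -> \bar R :=
  (@lebesgue_measure R \x @lebesgue_measure R)%E.

(* Lebesgue measurability (completion) together with the value of the
   Lebesgue measure: S is Lebesgue-measurable with |S| = m *)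
Definition leb2_measure_is (S : set (R * R)) (m : \bar R) : Prop :=
  exists F G : set (R * R),
    [/\ measurable F, measurable G, F `<=` S /\ S `<=` G,
        leb2 (G `\` F) = 0%E & leb2 F = m].

Definition mu_disc (K : nat) (d : 'I_K -> R * R) (alpha : 'I_K -> R)
  (E : set (R * R)) : \bar R :=
  (\sum_(k < K) ((alpha k)%:E * \d_(d k) E))%E.

Definition convex2 (u : R * R -> R) : Prop :=
  forall x z (t : R), 0 <= t <= 1 ->
    u ((1 - t) * x.1 + t * z.1, (1 - t) * x.2 + t * z.2)
      <= (1 - t) * u x + t * u z.

Definition subgrad (u : R * R -> R) x : set (R * R) :=
  [set p | forall z, u z >= u x + dot p (z.1 - x.1, z.2 - x.2)].

Definition subgrad_img (u : R * R -> R) (E : set (R * R)) : set (R * R) :=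
  \bigcup_(x in E) subgrad u x.

Definition aleksandrov_solution (K : nat) (d : 'I_K -> R * R)
  (alpha : 'I_K -> R) (u : R * R -> R) : Prop :=
  [/\ convex2 u,
      subgrad_img u setT `<=` ball01 &
      forall E : set (R * R), measurable E ->
        leb2_measure_is (subgrad_img u E) (mu_disc d alpha E)].

(* the finite part of phi(y) = max_k { y.d_k - v_k } (K >= 1) *)
Definition pog_max (K : nat) (d : 'I_K -> R * R) (v : 'I_K -> R) y : R :=
  fine (\big[Order.max/-oo%E]_(k < K) (dot y (d k) - v k)%:E).

(* C_k: points of B(0,1) where phi (= pog_max on B(0,1), +oo outside) is
   differentiable with gradient d_k.  Differentiability of the extended
   function phi at y requires phi finite near y, i.e. y interior to B(0,1),
   and then phi coincides with pog_max near y. *)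
Definition pog_cell (K : nat) (d : 'I_K -> R * R) (v : 'I_K -> R)
  (k : 'I_K) : set (R * R) :=
  [set y | ball01 y /\ (\forall z \near y, ball01 z) /\
     differentiable (pog_max d v) y /\
     (forall h, 'd (pog_max d v) y h = dot h (d k))].

Definition pogorelov_solution (K : nat) (d : 'I_K -> R * R)
  (alpha : 'I_K -> R) (v : 'I_K -> R) : Prop :=
  forall k : 'I_K, leb2_measure_is (pog_cell d v k) (alpha k)%:E.

Definition legendre_dual (K : nat) (d : 'I_K -> R * R) (v : 'I_K -> R)
  x : R :=
  sup [set dot x y - pog_max d v y | y in ball01].

End Defs.

(* Main.v *)
Require Import Defs.
From HB Require Import structures.
From mathcomp Require Import all_boot all_order all_algebra.
From mathcomp Require Import all_classical all_reals all_analysis.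
From mathcomp Require Import ring lra.
Import Order.TTheory GRing.Theory Num.Theory.
Import numFieldNormedType.Exports.
Local Open Scope classical_set_scope.
Local Open Scope ring_scope.

Section C.
Context {R : realType}.

Lemma cont_dot (c y : R * R) :
  (fun z : R * R => dot z c) @ y --> dot y c.
Proof.
apply: cvgD; apply: cvgMl.
- exact: cvg_fst.
- exact: cvg_snd.
Qed.

Definition dotl (a : R * R) (h : R * R) : R := dot h a.

Lemma dotl_lin (a : R * R) : linear (dotl a).
Proof.
move=> t [w1 w2] [y1 y2]; rewrite /dotl /dot /=.
change ((t * w1 + y1) * a.1 + (t * w2 + y2) * a.2 =
  t * (w1 * a.1 + w2 * a.2) + (y1 * a.1 + y2 * a.2)); ring.
Qed.

HB.instance Definition _ (a : R * R) :=
  GRing.isLinear.Build R (R * R)%type R *:%R (dotl a) (dotl_lin a).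

Lemma diff_near_affine (f : R * R -> R) (y a : R * R) (c : R) :
  (\forall z \near y, f z = dot z a - c) ->
  differentiable f y /\ forall h, 'd f y h = dot h a.
Proof.
move=> Hn.
have cl : continuous (dotl a) by move=> z; exact: cont_dot.
have Hs : @nbhs _ (R * R)%type (0 : R * R) [set x : R * R | f (x + y) = dot (x + y) a - c].
  have C : x + y @[x --> (0 : R * R)] --> y.
    suff : x + y @[x --> (0 : R * R)] --> 0 + y by rewrite add0r.
    apply: cvgD; [exact: cvg_id | exact: cvg_cst].
  exact: C _ Hn.
have fy : f y = dot y a - c by exact: nbhs_singleton Hn.
have dE : 'd f y = dotl a :> (R * R -> R).
  apply: diff_unique => //.
  apply/eqaddoP => eps eps0.
  move: Hs; apply: filterS => x Hx.
  have -> : (f \o +%R^~ y - (cst (f y) + dotl a)) x = f (x + y) - (f y + dot x a) by [].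
  rewrite (Hx : f (x + y) = _) fy.
  have -> : dot (x + y) a - c - (dot y a - c + dot x a) = 0.
    case: x {Hx} => x1 x2; case: y {Hn fy} => y1 y2; rewrite /dot /=.
    change ((x1 + y1) * a.1 + (x2 + y2) * a.2 - c - (y1 * a.1 + y2 * a.2 - c
      + (x1 * a.1 + x2 * a.2)) = 0); ring.
  by rewrite normr0 mulr_ge0 // ltW.
split; last by move=> h; rewrite dE.
apply/diff_locallyP; rewrite dE; split => //.
  apply/eqaddoP => eps eps0.
  move: Hs; apply: filterS => x Hx.
  have -> : (f \o +%R^~ y - (cst (f y) + dotl a)) x = f (x + y) - (f y + dot x a) by [].
  rewrite (Hx : f (x + y) = _) fy.
  have -> : dot (x + y) a - c - (dot y a - c + dot x a) = 0.
    case: x {Hx} => x1 x2; clear dE; case: y {Hn fy} => y1 y2; rewrite /dot /=.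
    change ((x1 + y1) * a.1 + (x2 + y2) * a.2 - c - (y1 * a.1 + y2 * a.2 - c
      + (x1 * a.1 + x2 * a.2)) = 0); ring.
  by rewrite normr0 mulr_ge0 // ltW.

Qed.

End C.


Section PartD.
Context {R : realType}.

Lemma meas_dot (c : R * R) : measurable_fun setT (fun z : R * R => dot z c).
Proof.
apply: measurable_realfun.measurable_funD;
  apply: measurable_realfun.measurable_funM;
  (exact: measurable_fst || exact: measurable_snd || exact: measurable_cst).
Qed.

Lemma meas_line (c : R * R) (e : R) : measurable [set y : R * R | dot y c = e].
Proof.
have := meas_dot c measurableT _ (measurable_set1 e).
by rewrite setTI.
Qed.

Lemma meas_sq : measurable_fun setT (fun z : R * R => z.1 ^+ 2 + z.2 ^+ 2).
Proof.
apply: measurable_realfun.measurable_funD; rewrite /=;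
  (apply: measurable_realfun.measurable_funX;
  (exact: measurable_fst || exact: measurable_snd)).
Qed.

Lemma meas_circle : measurable [set y : R * R | y.1 ^+ 2 + y.2 ^+ 2 = 1].
Proof. by have := meas_sq measurableT _ (measurable_set1 1); rewrite setTI. Qed.

Lemma meas_ball : measurable (@ball01 R).
Proof.
have := meas_sq measurableT _ (measurable_itv `]-oo, 1]); rewrite setTI.
congr measurable; apply/seteqP; split => y /=; rewrite /ball01 /= in_itv /=;
  by [].
Qed.

Lemma leb2_null_sec (A : set (R * R)) :
  (forall x, lebesgue_measure (xsection A x) = 0%E) -> leb2 A = 0%E.
Proof.
move=> H; rewrite /leb2 /product_measure1.
by apply: integral0_eq => x _; exact: H.
Qed.


Lemma null_line (c : R * R) (e : R) : c != 0 ->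
  leb2 [set y : R * R | dot y c = e] = 0%E.
Proof.
case: c => c1 c2 /= c0.
have [c20|c20] := eqVneq c2 0.
  have c10 : c1 != 0 by apply: contra c0 => /eqP ->; rewrite c20.
  have -> : [set y : R * R | dot y (c1, c2) = e] = [set e / c1] `*` setT.
    apply/seteqP; split => -[y1 y2]; rewrite /dot /= c20 mulr0 addr0.
      by move=> <- /=; split => //; rewrite mulfK.
    by move=> [/= -> _]; rewrite divfK.
  rewrite /leb2 product_measure1E; [|exact: measurable_set1|exact: measurableT].
  set X := (X in (X * _)%E); have -> : X = 0%E by exact: lebesgue_measure_set1.
  by rewrite mul0e.
apply: leb2_null_sec => x.
have -> : xsection [set y : R * R | dot y (c1, c2) = e] x = [set (e - x * c1) / c2].
  apply/seteqP; split => y; rewrite /xsection /dot /= inE /=.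
    by move=> <-; rewrite addrC addKr mulfK.
  by move=> ->; rewrite divfK // addrC subrK.
exact: lebesgue_measure_set1.
Qed.

Lemma null_circle : leb2 [set y : R * R | y.1 ^+ 2 + y.2 ^+ 2 = 1] = 0%E.
Proof.
apply: leb2_null_sec => x.
set s := Num.sqrt (1 - x ^+ 2).
have sub : xsection [set y : R * R | y.1 ^+ 2 + y.2 ^+ 2 = 1] x `<=` [set s] `|` [set - s].
  move=> y; rewrite /xsection /= inE /= => h.
  have hy : y ^+ 2 = 1 - x ^+ 2 by rewrite -h addrC addKr.
  rewrite /s -hy sqrtr_sqr.
  by case: (ler0P y) => hy0; [right; rewrite opprK | left].
apply/eqP; rewrite eq_le measure_ge0 andbT.
apply: (le_trans (@le_measure _ _ _ lebesgue_measure _ _ _ _ sub)).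
- by rewrite inE; apply: measurable_xsection; exact: meas_circle.
- by rewrite inE; apply: measurableU; exact: measurable_set1.
apply: (le_trans (measureU2 _ _ _)); try exact: measurable_set1.
set X := (X in (X + _ <= _)%E); set Y := (Y in (_ + Y <= _)%E).
have -> : X = 0%E by exact: lebesgue_measure_set1.
have -> : Y = 0%E by exact: lebesgue_measure_set1.
by rewrite adde0.
Qed.

Definition Fa (x : R) := x * Num.sqrt (1 - x ^+ 2) + asin x.

Lemma dF (x : R) : -1 < x < 1 -> is_derive x 1 Fa (2 * Num.sqrt (1 - x ^+ 2)).
Proof.
move=> hx.
have gpos : 0 < 1 - x ^+ 2.
  case/andP: hx => h1 h2.
  have : 0 < (1 - x) * (1 + x) by apply: mulr_gt0; lra.
  by rewrite expr2; nra.
have dg : is_derive x 1 (fun y : R => 1 - y ^+ 2) (- (2 * x)).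
  apply: is_derive_eq; rewrite add0r mul1r; change (x%:A) with (x * 1); ring.
have ds : is_derive x 1 (Num.sqrt \o (fun y : R => 1 - y ^+ 2))
    ((2 * Num.sqrt (1 - x ^+ 2))^-1 * - (2 * x)).
  apply: is_derive1_comp => //; exact: is_derive1_sqrt.
have dp : is_derive x 1 (fun y : R => y * Num.sqrt (1 - y ^+ 2))
    (x * ((2 * Num.sqrt (1 - x ^+ 2))^-1 * - (2 * x)) + Num.sqrt (1 - x ^+ 2)).
  have E : (fun y : R => y * Num.sqrt (1 - y ^+ 2)) = id * (Num.sqrt \o (fun y : R => 1 - y ^+ 2)) by apply/funext.
  rewrite E.
  have := is_deriveM (is_derive_id x 1) ds.
  move=> h; apply: (is_derive_eq h).
  by rewrite /= -[LHS]/(x * _ + _ * 1) mulr1.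
have da := is_derive1_asin hx.
have E : Fa = (fun y : R => y * Num.sqrt (1 - y ^+ 2)) + asin by apply/funext.
rewrite E.
have := is_deriveD dp da.
move=> h; apply: (is_derive_eq h).
set s := Num.sqrt (1 - x ^+ 2).
have s0 : s != 0 by rewrite /s sqrtr_eq0 -ltNge.
have s2 : s ^+ 2 = 1 - x ^+ 2 by rewrite /s sqr_sqrtr // ltW.
have e1 : x * ((2 * s)^-1 * - (2 * x)) = - (x ^+ 2) / s by field; rewrite ?s0 ?pnatr_eq0 //=.
rewrite e1.
have e2 : - (x ^+ 2) / s + s + s^-1 = (1 - x ^+ 2) / s + s by field; rewrite ?s0 ?pnatr_eq0 //=.
rewrite e2 -s2; field. all: by []. 
Qed.

Lemma sec_ball (x : R) :
  lebesgue_measure (xsection (@ball01 R) x) = (2 * Num.sqrt (1 - x ^+ 2))%:E.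
Proof.
have [hx|hx] := leP (x ^+ 2) 1.
  set s := Num.sqrt (1 - x ^+ 2).
  have s0 : 0 <= s by exact: sqrtr_ge0.
  have -> : xsection (@ball01 R) x = [set` `[- s, s]].
    apply/seteqP; split => y; rewrite /xsection /ball01 /= inE /= in_itv /=.
      move=> h; rewrite -ler_norml /s -sqrtr_sqr ler_sqrt; last by lra.
      by lra.
    move=> h; have : `|y| <= s by rewrite ler_norml.
    rewrite /s -sqrtr_sqr ler_sqrt; last by lra.
    lra.
  rewrite lebesgue_measure_itv /=.
  have [sp|sn] := ltP (- s) s.
    by rewrite lte_fin sp -EFinB; congr (_%:E); lra.
  rewrite lte_fin ltNge sn /=; congr (_%:E).
  have -> : s = 0 by lra.
  by rewrite mulr0.
have -> : xsection (@ball01 R) x = set0.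
  apply/seteqP; split => y; rewrite /xsection /ball01 /= inE /= => h //.
  have := sqr_ge0 y; lra.
by rewrite measure0 ltr0_sqrtr ?mulr0 //; lra.
Qed.

Lemma cont_f : continuous (fun x : R => 2 * Num.sqrt (1 - x ^+ 2)).
Proof.
move=> x; apply: cvgM; first exact: cvg_cst.
apply: (continuous_cvg _ (@sqrt_continuous R _)).
apply: cvgB; first exact: cvg_cst.
rewrite expr2; apply: cvgM; exact: cvg_id.
Qed.

Lemma Fa_cont (x : R) : -1 < x < 1 -> {for x, continuous Fa}.
Proof.
move=> hx; apply: differentiable_continuous.
by apply/derivable1_diffP; case: (dF x hx).
Qed.

Lemma leb2_ge0 (A : set (R * R)) : (0 <= leb2 A)%E.
Proof. by apply: integral_ge0 => x _; exact: measure_ge0. Qed.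

Lemma ball_area_ge : (pi%:E <= leb2 (@ball01 R))%E.
Proof.
have key : forall th : R, 0 < th < pi / 2 -> ((2 * th)%:E <= leb2 (@ball01 R))%E.
  move=> th /andP[th0 th1].
  have pi0 := @pi_gt0 R.
  set a := sin th.
  have a0 : 0 < a by apply: sin_gt0_pi; rewrite th0 /=; lra.
  have thI : th \in `[(- (pi / 2)), pi / 2] by rewrite in_itv /=; apply/andP; split; lra.
  have asa : asin a = th by rewrite /a sinK.
  have asna : asin (- a) = - th.
    rewrite /a -sinN sinK // in_itv /=; apply/andP; split; lra.
  have a1 : a < 1.
    rewrite lt_neqAle sin_le1 andbT; apply/eqP => h.
    have : asin a = asin (sin (pi / 2)) by rewrite sin_pihalf h.
    rewrite asa sinK; first lra.
    by rewrite in_itv /=; apply/andP; split; lra.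
  have mf := measurable_fun_xsection (@lebesgue_measure R) meas_ball.
  set I := (\int[lebesgue_measure]_(x in `[(- a)%R, a]) ((2 * Num.sqrt (1 - x ^+ 2))%R)%:E)%E.
  have h1 : ((2 * th)%:E <= I)%E.
    rewrite /I (@continuous_FTC2 _ _ Fa).
    - rewrite -EFinB lee_fin /Fa asa asna sqrrN.
      have : 0 <= a * Num.sqrt (1 - a ^+ 2) by rewrite mulr_ge0 ?sqrtr_ge0 // ltW.
      lra.
    - lra.
    - exact: continuous_subspaceT cont_f.
    - split.
      + move=> x; rewrite in_itv /= => /andP[h1 h2].
        have hx : -1 < x < 1 by apply/andP; split; lra.
        exact: (@ex_derive _ _ _ _ _ _ _ (dF x hx)).
      + apply: cvg_at_right_filter; apply: Fa_cont; apply/andP; split; lra.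
      + apply: cvg_at_left_filter; apply: Fa_cont; apply/andP; split; lra.
    - move=> x; rewrite in_itv /= => /andP[h1 h2].
      have hx : -1 < x < 1 by apply/andP; split; lra.
      by rewrite derive1E (@derive_val _ _ _ _ _ _ _ (dF x hx)).
  suff h2 : (I <= leb2 (@ball01 R))%E by exact: le_trans h1 h2.
  rewrite /leb2 /product_measure1.
  have -> : I = (\int[lebesgue_measure]_(x in `[(- a)%R, a]) (lebesgue_measure \o xsection ball01) x)%E.
    by apply: eq_integral => x _; rewrite /= sec_ball.
  by apply: ge0_subset_integral.
case E : (leb2 (@ball01 R)) => [l| |] //.
- rewrite lee_fin; apply/negPn/negP; rewrite -ltNge => lpi.
  have l0 : 0 <= l by have := leb2_ge0 (@ball01 R); rewrite E lee_fin.
  have pi0 := @pi_gt0 R.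
  have := key ((l + pi) / 4); rewrite E lee_fin.
  have -> : 0 < (l + pi) / 4 < pi / 2 by apply/andP; split; lra.
  move=> /(_ isT); lra.
- by rewrite leey.
- by have := leb2_ge0 (@ball01 R); rewrite E.
Qed.

End PartD.

Section E0.
Context {R : realType}.
Local Notation M := (@lebesgue_measure R \x @lebesgue_measure R)%E.

Lemma leb2_U2 (A B : set (R * R)) : measurable A -> measurable B ->
  (leb2 (A `|` B) <= leb2 A + leb2 B)%E.
Proof. move=> mA mB; exact: (@measureU2 _ _ _ M). Qed.

Lemma leb2_mono (A B : set (R * R)) : measurable A -> measurable B -> A `<=` B ->
  (leb2 A <= leb2 B)%E.
Proof. move=> mA mB AB; apply: (@le_measure _ _ _ M) => //; rewrite inE //. Qed.

Lemma leb2_U2_disj (A B : set (R * R)) : measurable A -> measurable B ->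
  A `&` B = set0 -> leb2 (A `|` B) = (leb2 A + leb2 B)%E.
Proof. move=> mA mB AB; exact: (@measureU _ _ _ M). Qed.

Lemma big_meas (I : Type) (s : seq I) (P : pred I) (A : I -> set (R * R)) :
  (forall k, measurable (A k)) -> measurable (\big[setU/set0]_(k <- s | P k) A k).
Proof.
move=> mA; elim/big_rec: _ => [|k S _ mS]; first exact: measurable0.
exact: measurableU.
Qed.

Lemma big_subadd (I : Type) (s : seq I) (P : pred I) (A : I -> set (R * R)) :
  (forall k, measurable (A k)) ->
  (leb2 (\big[setU/set0]_(k <- s | P k) A k) <= \sum_(k <- s | P k) leb2 (A k))%E.
Proof.
move=> mA; elim: s => [|k s IH].
  by rewrite !big_nil /leb2 measure0.
rewrite !big_cons; case: (P k) => //.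
apply: le_trans; first exact: (leb2_U2 _ _ (mA k) (big_meas I s P A mA)).
by rewrite leeD2l.
Qed.

Lemma big_add (I : eqType) (s : seq I) (P : pred I) (A : I -> set (R * R)) :
  (forall k, measurable (A k)) -> uniq s ->
  (forall i j, i != j -> A i `&` A j = set0) ->
  leb2 (\big[setU/set0]_(k <- s | P k) A k) = (\sum_(k <- s | P k) leb2 (A k))%E.
Proof.
move=> mA + dis; elim: s => [|k s IH].
  by rewrite !big_nil /leb2 measure0.
rewrite /= => /andP[ks us].
rewrite !big_cons; case: (P k); last exact: IH.
rewrite (leb2_U2_disj _ _ (mA k) (big_meas I s P A mA)) ?IH //.
rewrite big_distrr /=; apply: big1_seq => i /andP[_ iin].
apply: dis; apply: contraNneq ks => ->; exact: iin.
Qed.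

End E0.

Section PartA.
Context {R : realType} (K : nat) (d : 'I_K -> R * R) (v : 'I_K -> R).
Hypothesis HK : (0 < K)%N.

Local Notation phi := (pog_max d v).
Local Notation u := (legendre_dual d v).

Lemma pog_max_spec y : exists j, phi y = dot y (d j) - v j /\
  forall k, dot y (d k) - v k <= dot y (d j) - v j.
Proof.
pose a k := dot y (d k) - v k.
pose k0 := Ordinal HK.
pose j := [arg max_(k > k0) a k]%O.
have hj : forall k, a k <= a j.
  rewrite /j; case: (arg_maxP a (isT : xpredT k0)) => i _ Hi k.
  exact: Hi.
exists j; split => //.
rewrite /pog_max.
have -> : (\big[Order.max/-oo]_(k < K) (dot y (d k) - v k)%:E = (a j)%:E)%E.
  apply/le_anti/andP; split.
    apply/bigmax_leP; split; first exact: leNye.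
    by move=> i _; rewrite lee_fin; exact: hj.
  exact: (le_bigmax _ (fun k => (a k)%:E) j).
by [].
Qed.

Lemma pog_max_ge y k : dot y (d k) - v k <= phi y.
Proof. by have [j [-> H]] := pog_max_spec y; exact: H. Qed.

Lemma dot_amgm (w y : R * R) : dot w y <= (w.1 ^+ 2 + w.2 ^+ 2 + y.1 ^+ 2 + y.2 ^+ 2) / 2.
Proof. have := sqr_ge0 (w.1 - y.1); have := sqr_ge0 (w.2 - y.2). rewrite /dot; nra. Qed.

Lemma dot_lin (t : R) (w y a : R * R) :
  dot (t *: w + y) a = t * dot w a + dot y a.
Proof.
case: w y => w1 w2 [y1 y2]; rewrite /dot /=.
change ((t * w1 + y1) * a.1 + (t * w2 + y2) * a.2 =
  t * (w1 * a.1 + w2 * a.2) + (y1 * a.1 + y2 * a.2)); ring.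
Qed.

Lemma dotC (x y : R * R) : dot x y = dot y x.
Proof. by rewrite /dot mulrC [x.2 * _]mulrC. Qed.

Definition Sx x := [set dot x y - phi y | y in ball01].

Lemma Sx_n0 x : Sx x !=set0.
Proof. by exists (dot x 0 - phi 0), 0 => //; rewrite /ball01 /=; lra. Qed.

Lemma Sx_ub x : has_ubound (Sx x).
Proof.
pose k0 := Ordinal HK.
pose w := (x.1 - (d k0).1, x.2 - (d k0).2).
exists ((w.1 ^+ 2 + w.2 ^+ 2 + 1) / 2 + v k0).
move=> _ [y yB <-].
have h1 := pog_max_ge y k0.
have h2 := dot_amgm w y.
move: yB h1 h2; rewrite /ball01 /dot /w /=. lra.
Qed.

Lemma u_ge x y : ball01 y -> dot x y - phi y <= u x.
Proof.
move=> yB; apply: (sup_upper_bound (conj (Sx_n0 x) (Sx_ub x))).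
by exists y.
Qed.

Lemma u_le x M : (forall y, ball01 y -> dot x y - phi y <= M) -> u x <= M.
Proof.
move=> H; apply: ge_sup; first exact: Sx_n0.
by move=> _ [y yB <-]; exact: H.
Qed.

Lemma u_convex : convex2 u.
Proof.
move=> x z t /andP[t0 t1].
apply: u_le => y yB.
have h1 := u_ge x y yB; have h2 := u_ge z y yB.
have -> : dot ((1 - t) * x.1 + t * z.1, (1 - t) * x.2 + t * z.2) y - phi y
   = (1 - t) * (dot x y - phi y) + t * (dot z y - phi y).
  rewrite /dot /=; ring.
apply: lerD; apply: ler_wpM2l => //; lra.
Qed.

Lemma subgrad_ball x p : subgrad u x p -> ball01 p.
Proof.
move=> H.
have h1 := H (x.1 + p.1, x.2 + p.2).
have h2 : u (x.1 + p.1, x.2 + p.2) <= u x + (p.1 ^+ 2 + p.2 ^+ 2 + 1) / 2.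
  apply: u_le => y yB.
  have := u_ge x y yB; have := dot_amgm p y.
  move: yB; rewrite /ball01 /dot /=; lra.
move: h1 h2; rewrite /ball01 /dot /=.
have -> : x.1 + p.1 - x.1 = p.1 by ring.
have -> : x.2 + p.2 - x.2 = p.2 by ring.
lra.
Qed.


Lemma cell_dir k y (p : R * R) : pog_cell d v k y ->
  (forall w : R * R, \forall t \near 0^'+,
      phi y + t * dot p w <= phi (t *: w + y)) -> p = d k.
Proof.
move=> [_ [_ [dif dval]]] H.
have key : forall w : R * R, dot p w <= dot w (d k).
  move=> w.
  have der := @diff_derivable _ _ _ _ _ w dif.
  have sub : (0:R)^'+ `=>` (0:R)^'.
    apply: within_subset => x /= x0; exact: lt0r_neq0.
  have cv := cvg_trans (cvg_app (fun h => h^-1 *: ((phi \o shift y) (h *: w) - phi y)) sub) der.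
  rewrite -(dval w) -deriveE //.
  have := @ler_cvg_to _ _ _ _ (fun=> dot p w) _ _ _ (cvg_cst _) cv.
  apply.
  near=> t.
  have tpos : 0 < t by near: t; exact: nbhs_right_gt.
  have Ht : phi y + t * dot p w <= phi (t *: w + y) by near: t; exact: H.
  rewrite /= -[X in X <= _](mulKf (lt0r_neq0 tpos)).
  rewrite [_ *: _]/(_ * _).
  apply: ler_wpM2l; first by rewrite invr_ge0 ltW.
  lra.
pose w := (p.1 - (d k).1, p.2 - (d k).2).
have := key w; rewrite /dot /w /= => h.
have e1 : p.1 = (d k).1.
  have := sqr_ge0 (p.1 - (d k).1); have := sqr_ge0 (p.2 - (d k).2).
  move=> h2 h1; apply/eqP; rewrite -subr_eq0 -sqrf_eq0; apply/eqP; nra.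
have e2 : p.2 = (d k).2.
  have := sqr_ge0 (p.1 - (d k).1); have := sqr_ge0 (p.2 - (d k).2).
  move=> h2 h1; apply/eqP; rewrite -subr_eq0 -sqrf_eq0; apply/eqP; nra.
by case: p e1 e2 {w h key H} => p1 p2 /= -> ->; case: (d k).
Unshelve. all: by end_near.
Qed.


Lemma active_grad k y j : pog_cell d v k y ->
  phi y = dot y (d j) - v j -> d j = d k.
Proof.
move=> cy hj; apply: (@cell_dir k y (d j) cy) => w; apply: nearW => t.
have := pog_max_ge (t *: w + y) j.
rewrite hj dot_lin [dot (d j) w]dotC; lra.
Qed.

Lemma u_at_dk k y : pog_cell d v k y -> u (d k) <= dot (d k) y - phi y.
Proof.
move=> cy; have [j [hj _]] := pog_max_spec y.
have djk := active_grad k y j cy hj.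
apply: (u_le) => y' _.
have := pog_max_ge y' j.
move: hj; rewrite djk /dot /=; lra.
Qed.

Lemma cell_subgrad k y : pog_cell d v k y -> subgrad u (d k) y.
Proof.
move=> cy z; have yB : ball01 y by case: cy.
have h1 := u_ge z y yB; have h2 := u_at_dk k y cy.
move: h1 h2; rewrite /dot /=; lra.
Qed.

Lemma cell_subgrad_uniq k y x : pog_cell d v k y -> subgrad u x y -> x = d k.
Proof.
move=> cy sg; apply: (@cell_dir k y x cy) => w.
have nb : \forall z \near y, ball01 z by case: cy => _ [].
have C : (fun t : R => t *: w + y) @ 0^'+ --> y.
  suff : (fun t : R => t *: w + y) @ 0^'+ --> 0 *: w + y by rewrite scale0r add0r.
  apply: cvgD; last exact: cvg_cst.
  apply: cvgZl; exact: (@cvg_at_right_filter R R id 0 0 cvg_id).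
have H : \forall t \near 0^'+, ball01 (t *: w + y) := C _ nb.
move: H; apply: filterS => t tB.
have h1 := u_ge x _ tB.
have h2 := sg (d k).
have h3 := u_at_dk k y cy.
move: h1 h2 h3; rewrite [dot x _]dotC dot_lin [dot w x]dotC.
rewrite /dot /=; lra.
Qed.


Lemma good_point y : y.1 ^+ 2 + y.2 ^+ 2 < 1 ->
  (forall i j, phi y = dot y (d i) - v i -> phi y = dot y (d j) - v j -> d i = d j) ->
  exists k, pog_cell d v k y.
Proof.
move=> yin hgood.
have [j [hj hmax]] := pog_max_spec y.
exists j.
have nle : \forall z \near y, forall i, dot z (d i) - v i <= dot z (d j) - v j.
  apply: (@filter_forall _ _ (fun i z => dot z (d i) - v i <= dot z (d j) - v j) (nbhs y) _) => i.
  have [lt|ge] := ltP (dot y (d i) - v i) (dot y (d j) - v j).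
    have C : (fun z => (dot z (d j) - v j) - (dot z (d i) - v i)) @ y -->
        (dot y (d j) - v j) - (dot y (d i) - v i).
      by apply: cvgB; apply: cvgB; (try exact: cont_dot); exact: cvg_cst.
    have := cvgr_gt _ C 0; rewrite subr_gt0 => /(_ _ lt).
    by apply: filterS => z; rewrite subr_gt0 => /ltW.
  have eqij : dot y (d i) - v i = dot y (d j) - v j.
    by apply/le_anti; rewrite ge hmax.
  have dij : d i = d j by apply: hgood => //; rewrite hj eqij.
  have vij : v i = v j by move: eqij; rewrite dij; lra.
  by apply: nearW => z; rewrite dij vij.
have nphi : \forall z \near y, phi z = dot z (d j) - v j.
  move: nle; apply: filterS => z Hz.
  have [j' [hj' hmax']] := pog_max_spec z.
  by rewrite hj'; apply/le_anti; rewrite Hz hmax'.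
have [dif dval] := diff_near_affine _ _ _ _ nphi.
split; first by rewrite /ball01 /=; exact: ltW.
split; last by split.
have C : (fun z : R * R => z.1 ^+ 2 + z.2 ^+ 2) @ y --> y.1 ^+ 2 + y.2 ^+ 2.
  apply: cvgD; rewrite !expr2; apply: cvgM; (exact: cvg_fst || exact: cvg_snd).
have := cvgr_lt _ C 1; move=> /(_ _ yin); by apply: filterS => z /ltW.
Qed.

End PartA.


Section BigMem.
Context {T : Type}.
Lemma mem_bigU (I : eqType) (s : seq I) (P : pred I) (A : I -> set T) x :
  (\big[setU/set0]_(k <- s | P k) A k) x <-> exists k, [/\ k \in s, P k & A k x].
Proof.
elim: s => [|j s IH]; first by rewrite big_nil; split => // -[k []].
rewrite big_cons; split.
  case: ifP => Pj.
    case=> [Ajx|/IH [k [ks Pk Akx]]]; first by exists j; rewrite mem_head.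
    by exists k; rewrite in_cons ks orbT.
  by move=> /IH [k [ks Pk Akx]]; exists k; rewrite in_cons ks orbT.
move=> [k []]; rewrite in_cons => /orP[/eqP ->|ks] Pk Akx.
  by rewrite Pk; left.
case: ifP => _; last by apply/IH; exists k.
by right; apply/IH; exists k.
Qed.
End BigMem.

Section Main.
Context {R : realType} (K : nat) (d : 'I_K -> R * R) (alpha : 'I_K -> R)
  (v : 'I_K -> R).
Hypothesis HK : (0 < K)%N.
Hypothesis Halpha : forall k, 0 < alpha k.
Hypothesis Hsum : \sum_(k < K) alpha k = pi.
Hypothesis Hpog : pogorelov_solution d alpha v.

Local Notation phi := (pog_max d v).
Local Notation u := (legendre_dual d v).

Definition lineset (i j : 'I_K) : set (R * R) :=
  [set y | dot y ((d i).1 - (d j).1, (d i).2 - (d j).2) = v i - v j].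

Definition badset : set (R * R) :=
  [set y : R * R | y.1 ^+ 2 + y.2 ^+ 2 = 1] `|`
  \big[setU/set0]_(p : 'I_K * 'I_K | d p.1 != d p.2) lineset p.1 p.2.

Lemma meas_badset : measurable badset.
Proof.
apply: measurableU; first exact: meas_circle.
apply: big_meas => p; exact: meas_line.
Qed.

Lemma null_badset : leb2 badset = 0%E.
Proof.
apply/eqP; rewrite eq_le leb2_ge0 andbT.
apply: le_trans; first exact: (leb2_U2 _ _ meas_circle (big_meas _ _ _ _ (fun p => meas_line _ _))).
rewrite null_circle add0e.
apply: le_trans; first exact: (big_subadd _ _ _ _ (fun p : 'I_K * 'I_K => meas_line _ _)).
rewrite big1 // => p hp; apply: null_line.
apply: contra hp => /eqP [h1 h2].
case: (d p.1) (d p.2) h1 h2 => a1 a2 [b1 b2] /= h1 h2.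
apply/eqP; congr pair; lra.
Qed.

Lemma cover y : ball01 y -> (exists k, pog_cell d v k y) \/ badset y.
Proof.
move=> yB.
have [e1|lt1] := eqVneq (y.1 ^+ 2 + y.2 ^+ 2) 1; first by right; left.
have yin : y.1 ^+ 2 + y.2 ^+ 2 < 1 by rewrite lt_neqAle lt1.
have [[i [j [hi [hj hij]]]]|nb] := pselect (exists i j, phi y = dot y (d i) - v i /\
   phi y = dot y (d j) - v j /\ d i != d j).
  right; right; apply/mem_bigU; exists (i, j); split => //.
  rewrite /lineset /= /dot /=; move: hi hj; rewrite /dot; lra.
left; apply: (@good_point _ K d v HK y yin) => i j hi hj.
case: (eqVneq (d i) (d j)) => // h; exfalso; apply: nb; exists i, j; split => //.
Qed.

Lemma FG_choice : {FG : 'I_K -> set (R * R) * set (R * R) & forall k,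
  [/\ measurable (FG k).1, measurable (FG k).2,
      (FG k).1 `<=` pog_cell d v k /\ pog_cell d v k `<=` (FG k).2,
      leb2 ((FG k).2 `\` (FG k).1) = 0%E & leb2 (FG k).1 = (alpha k)%:E]}.
Proof.
pose P k (FG : set (R * R) * set (R * R)) :=
  [/\ measurable FG.1, measurable FG.2,
      FG.1 `<=` pog_cell d v k /\ pog_cell d v k `<=` FG.2,
      leb2 (FG.2 `\` FG.1) = 0%E & leb2 FG.1 = (alpha k)%:E].
have H : forall k, exists FG, P k FG.
  by move=> k; have [F [G H]] := Hpog k; exists (F, G).
exact: (choice H).
Qed.

Let FG := projT1 FG_choice.
Let HFG := projT2 FG_choice.
Let Fk k := (FG k).1.
Let Gk k := (FG k).2.

Lemma mFk k : measurable (Fk k). Proof. by case: (HFG k). Qed.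
Lemma mGk k : measurable (Gk k). Proof. by case: (HFG k). Qed.
Lemma Fk_sub k : Fk k `<=` pog_cell d v k. Proof. by case: (HFG k) => _ _ []. Qed.
Lemma Gk_sup k : pog_cell d v k `<=` Gk k. Proof. by case: (HFG k) => _ _ []. Qed.
Lemma GFk0 k : leb2 (Gk k `\` Fk k) = 0%E. Proof. by case: (HFG k). Qed.
Lemma Fkm k : leb2 (Fk k) = (alpha k)%:E. Proof. by case: (HFG k). Qed.

Lemma Gk_le k : (leb2 (Gk k) <= (alpha k)%:E)%E.
Proof.
have sub : Gk k `<=` Fk k `|` (Gk k `\` Fk k).
  by move=> x Gx; have [Fx|nFx] := pselect (Fk k x); [left|right].
apply: le_trans; first apply: (leb2_mono _ _ (mGk k) _ sub).
  by apply: measurableU; [exact: mFk|apply: measurableD; [exact: mGk|exact: mFk]].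
apply: le_trans; first apply: (leb2_U2 _ _ (mFk k)).
  by apply: measurableD; [exact: mGk|exact: mFk].
by rewrite GFk0 Fkm adde0.
Qed.

Lemma cell_eq j k y : pog_cell d v j y -> pog_cell d v k y -> d j = d k.
Proof.
move=> cj ck.
have sg := @cell_subgrad _ K d v HK _ _ cj.
exact: (@cell_subgrad_uniq _ K d v HK _ _ _ ck sg).
Qed.

Lemma d_inj : injective d.
Proof.
move=> i j dij; apply/eqP; apply/negPn/negP => nij.
have sub : ball01 `<=` (\big[setU/set0]_(k | k != j) Gk k) `|` badset.
  move=> y yB; have [[k ck]|bd] := cover y yB; last by right.
  left; apply/mem_bigU.
  have [kj|kj] := eqVneq k j.
    exists i; split; [exact: mem_index_enum | by [] | ].
    apply: Gk_sup; move: ck; rewrite kj /pog_cell /= -dij; exact.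
  by exists k; split; [exact: mem_index_enum | by [] | exact: Gk_sup].
have mU : measurable (\big[setU/set0]_(k | k != j) Gk k) by apply: big_meas => k; exact: mGk.
have h1 := ball_area_ge (R := R).
have h2 := leb2_mono _ _ meas_ball (measurableU _ _ mU meas_badset) sub.
have h3 := leb2_U2 _ _ mU meas_badset.
have h4 := big_subadd _ (index_enum 'I_K) (fun k => k != j) _ mGk.
have h5 : (\sum_(k | k != j) leb2 (Gk k) <= \sum_(k | k != j) (alpha k)%:E)%E.
  by apply: lee_sum => k _; exact: Gk_le.
rewrite null_badset adde0 in h3.
have := le_trans h1 (le_trans h2 (le_trans h3 (le_trans h4 h5))).
rewrite sumEFin lee_fin.
move: Hsum; rewrite (bigD1 j) //= => hs.
have := Halpha j; lra.
Qed.

Lemma main_meas (E : set (R * R)) : measurable E ->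
  leb2_measure_is (subgrad_img u E) (mu_disc d alpha E).
Proof.
move=> mE.
pose Fe := \big[setU/set0]_(k | d k \in E) Fk k.
pose Ge := (\big[setU/set0]_(k | d k \in E) Gk k) `|` badset.
have mFe : measurable Fe by apply: big_meas => k; exact: mFk.
have mGU : measurable (\big[setU/set0]_(k | d k \in E) Gk k).
  by apply: big_meas => k; exact: mGk.
have mGe : measurable Ge by apply: measurableU => //; exact: meas_badset.
exists Fe, Ge; split => //.
- split.
  + move=> y /mem_bigU [k [_ kE Fy]].
    exists (d k); first by rewrite -in_setE.
    exact: (@cell_subgrad _ K d v HK _ _ (Fk_sub _ _ Fy)).
  + move=> y [x Ex sg].
    have yB := @subgrad_ball _ K d v HK _ _ sg.
    have [[k ck]|bd] := cover y yB; last by right.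
    have xk := @cell_subgrad_uniq _ K d v HK _ _ _ ck sg.
    left; apply/mem_bigU; exists k; split; first exact: mem_index_enum.
      by rewrite in_setE -xk.
    exact: Gk_sup.
- have mGD : measurable (\big[setU/set0]_(k : 'I_K) (Gk k `\` Fk k)).
    by apply: big_meas => k; apply: measurableD; [exact: mGk|exact: mFk].
  have sub : Ge `\` Fe `<=` (\big[setU/set0]_(k : 'I_K) (Gk k `\` Fk k)) `|` badset.
    move=> y [[/mem_bigU [k [_ kE Gy]]|bd] nF]; last by right.
    left; apply/mem_bigU; exists k; split; [exact: mem_index_enum|by []|split => //].
    by move=> Fy; apply: nF; apply/mem_bigU; exists k; split => //; exact: mem_index_enum.
  apply/eqP; rewrite eq_le leb2_ge0 andbT.
  apply: le_trans; first exact: (leb2_mono _ _ (measurableD mGe mFe) (measurableU _ _ mGD meas_badset) sub).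
  apply: le_trans; first exact: (leb2_U2 _ _ mGD meas_badset).
  rewrite null_badset adde0.
  apply: le_trans; first exact: (big_subadd _ _ _ _ (fun k => measurableD (mGk k) (mFk k))).
  by rewrite big1 // => k _; rewrite GFk0.
- rewrite /Fe (big_add _ _ _ _ mFk (index_enum_uniq _)); last first.
    move=> i j ij; apply/seteqP; split => // y [Fi Fj].
    have := cell_eq _ _ _ (Fk_sub _ _ Fi) (Fk_sub _ _ Fj) => /d_inj eq.
    by move: ij; rewrite eq eqxx.
  rewrite /mu_disc big_mkcond /=; apply: eq_bigr => k _.
  rewrite diracE; case: (d k \in E).
    by rewrite Fkm mule1.
  by rewrite mule0.
Qed.

End Main.

Close Scope classical_set_scope.

Theorem lemma2p4 (R : realType) (K : nat) (d : 'I_K -> R * R)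
  (alpha : 'I_K -> R) (v : 'I_K -> R) :
  (0 < K)%N ->
  (forall k, 0 < alpha k) ->
  \sum_(k < K) alpha k = pi ->
  pogorelov_solution d alpha v ->
  aleksandrov_solution d alpha (legendre_dual d v).
Proof.
move=> HK Ha Hs Hp; split.
- exact: (@u_convex _ K d v HK).
- by move=> p [x _ hp]; exact: (@subgrad_ball _ K d v HK _ _ hp).
- by move=> E mE; apply: main_meas.
Qed.
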